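(* For every integer $m \geq 1$, the complete bipartite graph $K_{m,m+1}$ is stable.
   Context: For a simple graph $G$, the independence polynomial is $i(G,x)=\sum_{k=0}^{\alpha(G)} i_k(G)x^k$, where $i_k(G)$ is the number of independent sets of size $k$ in $G$ (with $i_0(G)=1$). A graph $G$ is called stable if every root $z$ of $i(G,x)$ satisfies $\mathrm{Re}(z)\leq 0$. $K_{a,b}$ denotes the complete bipartite graph with parts of sizes $a$ and $b$; its independence polynomial is $(1+x)^a+(1+x)^b-1$. *)

(* Defs.v *)
From HB Require Import structures.
From mathcomp Require Import all_boot all_order all_algebra all_field.
Set Implicit Arguments. Unset Strict Implicit. Unset Printing Implicit Defensive.
Import Order.TTheory GRing.Theory Num.Theory.
Local Open Scope ring_scope.

(* A simple graph is given by a symmetric irreflexive relation e on a finType. *)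
Definition indep_set (T : finType) (e : rel T) (S : {set T}) : bool :=
  [forall x in S, forall y in S, ~~ e x y].

Definition indep_poly (R : nzRingType) (T : finType) (e : rel T) : {poly R} :=
  \sum_(S : {set T} | indep_set e S) 'X^#|S|.

(* Stable: every complex root z of i(G,x) has Re z <= 0.  Complex numbers are
   taken as algC; all roots of an integer polynomial are algebraic. *)
Definition stable (T : finType) (e : rel T) : Prop :=
  forall z : algC, root (indep_poly algC e) z -> 'Re z <= 0.

Definition Kbip_rel (a b : nat) : rel ('I_a + 'I_b)%type :=
  fun x y => match x, y with
             | inl _, inr _ => true
             | inr _, inl _ => true
             | _, _ => false
             end.
Arguments stable [T] e.
Arguments Kbip_rel : clear implicits.

(* Main.v *)
Require Import Defs.
From HB Require Import structures.
From mathcomp Require Import all_boot all_order all_algebra all_field.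
From mathcomp Require Import ring.
Import Order.TTheory GRing.Theory Num.Theory.
Local Open Scope ring_scope.

Lemma Re1D (z : algC) (n : nat) : 'Re (n%:R + z) = n%:R + 'Re z.
Proof. by rewrite raddfD /= (Creal_ReP _ _) // realn. Qed.


Lemma sum_subsets (R : comNzRingType) (T : finType) (L : {set T}) (z : R) :
  \sum_(S : {set T} | S \subset L) z ^+ #|S| = (1 + z) ^+ #|L|.
Proof.
rewrite -prodr_const.
rewrite (eq_bigr (fun i => (if i \in L then z else 0) + 1)); last first.
  by move=> i ->; rewrite addrC.
rewrite [RHS]big_mkcond /=.
rewrite (eq_bigr (fun i => (if i \in L then z else 0) + 1)); last first.
  by move=> i _; case: (i \in L); rewrite ?add0r.
rewrite (@bigA_distr _ _ _ _ _ _ (fun i => if i \in L then z else 0) (fun _ => 1)) [LHS]big_mkcond /=.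
apply: eq_bigr => S _.
rewrite -big_mkcond /=.
case: ifP => [sSL|nsSL].
  rewrite -prodr_const; apply: eq_bigr => i iS.
  by rewrite (subsetP sSL i iS).
have [i iS iL] : exists2 i, i \in S & i \notin L.
  by move/negbT/subsetPn: nsSL => [i iS iL]; exists i.
by rewrite (bigD1 i) //= (negbTE iL) mul0r.
Qed.

Section K.
Variables a b : nat.
Definition isL (x : ('I_a + 'I_b)%type) : bool := if x is inl _ then true else false.
Definition LL := [set x | isL x].
Definition RR := [set x | ~~ isL x].

Lemma cardLL : #|LL| = a.
Proof.
have -> : LL = inl @: [set: 'I_a].
  apply/setP => -[i|j]; rewrite !inE /=.
    by rewrite imset_f.
  by apply/esym/imsetP => -[i _].
by rewrite card_imset ?cardsT ?card_ord //; move=> i j [].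
Qed.

Lemma cardRR : #|RR| = b.
Proof.
have -> : RR = inr @: [set: 'I_b].
  apply/setP => -[i|j]; rewrite !inE /=.
    by apply/esym/imsetP => -[j _].
  by rewrite imset_f.
by rewrite card_imset ?cardsT ?card_ord //; move=> i j [].
Qed.

Lemma indepK (S : {set ('I_a + 'I_b)%type}) :
  indep_set (Kbip_rel a b) S = (S \subset LL) || (S \subset RR).
Proof.
apply/idP/idP.
  move=> ind; apply/negPn/negP; rewrite negb_or => /andP[/subsetPn[x xS xL] /subsetPn[y yS yR]].
  move: ind => /forallP/(_ x)/implyP/(_ xS)/forallP/(_ y)/implyP/(_ yS).
  move: xL yR; rewrite !inE.
  by case: x {xS} => [i|i]; case: y {yS} => [j|j].
case/orP => /subsetP sub; apply/forallP => x; apply/implyP => xS;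
  apply/forallP => y; apply/implyP => yS;
  move: (sub x xS) (sub y yS); rewrite !inE;
  by case: x {xS} => [i|i]; case: y {yS} => [j|j].
Qed.

Lemma indep_eval (z : algC) :
  (indep_poly algC (Kbip_rel a b)).[z] = (1 + z) ^+ a + (1 + z) ^+ b - 1.
Proof.
rewrite /indep_poly horner_sum.
under eq_bigr do rewrite hornerXn.
under eq_bigl do rewrite indepK.
rewrite (bigID (fun S : {set _} => S \subset LL)) /=.
rewrite (eq_bigl (fun S : {set ('I_a + 'I_b)%type} => S \subset LL)); last first.
  by move=> S; case: (S \subset LL); rewrite ?andbF ?andbT /=.
rewrite sum_subsets cardLL.
have -> : (1 + z) ^+ b = \sum_(S : {set ('I_a + 'I_b)%type} | S \subset RR) z ^+ #|S| by rewrite sum_subsets cardRR.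
rewrite -addrA; congr (_ + _).
rewrite [in RHS](bigD1 set0) ?sub0set //= cards0 expr0 (addrC 1) addrK.
apply: eq_bigl => S.
rewrite andbC.
case sR: (S \subset RR); last by rewrite orbF; case: (S \subset LL).
case sL: (S \subset LL) => /=.
  apply/esym/negbF/eqP/setP => x; rewrite inE.
  apply/negbTE/negP => xS.
  by move: (subsetP sL x xS) (subsetP sR x xS); rewrite !inE => ->.
apply/esym/eqP => S0; move: sL; by rewrite S0 sub0set.
Qed.
End K.
Theorem proposition2p1 (m : nat) (hm : (1 <= m)%N) : stable (Kbip_rel m m.+1).
Proof.
move=> z; rewrite /root indep_eval => /eqP /subr0_eq h.
rewrite real_leNgt ?Creal_Re ?real0 //; apply/negP => hz.
have e : (1 + z) ^+ m * (2 + z) = 1.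
  by rewrite -[RHS]h exprS; ring.
have h1 : 1 < `|1 + z|.
  apply: (lt_le_trans _ (leif_Re_Creal _).1).
  by rewrite (Re1D z 1) ltrDl.
have h2 : 1 < `|2 + z|.
  apply: (lt_le_trans _ (leif_Re_Creal _).1).
  rewrite (Re1D z 2); apply: (@lt_trans _ _ 2); first by rewrite ltr1n.
  by rewrite ltrDl.
have h3 : 1 <= `|1 + z| ^+ m by rewrite exprn_ege1 // ltW.
have := congr1 (fun x => `|x|) e; rewrite /= normrM normrX normr1 => e'.
have : 1 < `|1 + z| ^+ m * `|2 + z|.
  apply: (lt_le_trans h2); rewrite ler_peMl //.
by rewrite e' ltxx.
Qed.
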